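(* Let $f$, $g$, $\xi$, $F$ satisfy the standing assumptions below (except that $\lim_{x\to0^+}F(x)=+\infty$ is not assumed separately), and let $x$ be the unique continuous solution of $x'(t)=-f(x(t))+g(t)$, $t>0$, $x(0)=\xi$. Suppose that either $f\in\mathrm{RV}_0(\beta)$ for some $\beta>1$ or $f\circ F^{-1}\in\mathrm{RV}_\infty(-1)$; that there exist $\delta>0$ and a function $\phi$ increasing on $(0,\delta)$ with $\lim_{x\to0^+}f(x)/\phi(x)=1$; that $x(t)\to0$ as $t\to\infty$; and that \[ \lim_{t\to\infty}\frac{g(t)}{f(F^{-1}(t))}=L\in[0,\infty]. \] (i) If $L=0$, then $\lim_{t\to\infty}F(x(t))/t=1$. (ii) If $L\in(0,\infty)$, then $\lim_{t\to\infty}F(x(t))/t=\Lambda_*(L)\in(0,1)$, where (I) if $f\in\mathrm{RV}_0(\beta)$ with $\beta>1$, $\Lambda_*$ is the unique solution in $(0,1)$ of $(1-\Lambda_* )\Lambda_*^{-\beta/(\beta-1)}=L$, and (II) if $f\circ F^{-1}\in\mathrm{RV}_\infty(-1)$, $\Lambda_*=1/(1+L)$. (iii) If $L=\infty$, then $\lim_{t\to\infty}F(x(t))/t=0$.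
   Context: Standing assumptions: $f\in C(\mathbb{R};\mathbb{R})$ is locally Lipschitz continuous on $\mathbb{R}$, $f(0)=0$ and $xf(x)>0$ for $x\neq0$; $g\in C([0,\infty);\mathbb{R})$ with $g(t)>0$ for $t>0$; $\xi>0$. $F(x)=\int_x^1 \frac{du}{f(u)}$ for $x>0$; $F$ is strictly decreasing with inverse $F^{-1}$, and (as needed for $F^{-1}(t)$ to be defined for all large $t$ and tend to $0$) $F(x)\to+\infty$ as $x\to0^+$. $\mathrm{RV}_0(\beta)$: measurable positive $\varphi$ on $(0,\infty)$ with $\varphi(\lambda x)/\varphi(x)\to\lambda^\beta$ as $x\to0^+$ for every $\lambda>0$. $\mathrm{RV}_\infty(\alpha)$: measurable positive $h$ with $h(\lambda t)/h(t)\to\lambda^\alpha$ as $t\to\infty$ for every $\lambda>0$. *)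

(* Defs.v *)
From Stdlib Require Import Reals Lra.
Open Scope R_scope.

Definition lim_right0 (phi : R -> R) (l : R) : Prop :=
  forall eps, 0 < eps -> exists d, 0 < d /\
    forall x, 0 < x < d -> Rabs (phi x - l) < eps.

Definition lim_infty (h : R -> R) (l : R) : Prop :=
  forall eps, 0 < eps -> exists T, forall t, T < t -> Rabs (h t - l) < eps.

Definition lim_infty_pinf (h : R -> R) : Prop :=
  forall M, exists T, forall t, T < t -> M < h t.

(* RV_0(beta): positive on (0,oo), phi(lam x)/phi(x) -> lam^beta as x -> 0+.
   (Measurability omitted: all functions to which it is applied here are continuous.) *)
Definition RV0 (beta : R) (phi : R -> R) : Prop :=
  (forall x, 0 < x -> 0 < phi x) /\
  forall lam, 0 < lam -> lim_right0 (fun x => phi (lam * x) / phi x) (Rpower lam beta).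

Definition RVinf (alpha : R) (h : R -> R) : Prop :=
  (forall t, 0 < t -> 0 < h t) /\
  forall lam, 0 < lam -> lim_infty (fun t => h (lam * t) / h t) (Rpower lam alpha).

Definition loc_lipschitz (f : R -> R) : Prop :=
  forall a b, exists K, forall u v, a <= u <= b -> a <= v <= b ->
    Rabs (f u - f v) <= K * Rabs (u - v).

Definition is_F (f F : R -> R) : Prop :=
  forall x, 0 < x -> forall pr : Riemann_integrable (fun u => / f u) x 1,
    F x = RiemannInt pr.

(* Main.v *)
Require Import Defs.
From Stdlib Require Import Reals Lra.
From Coquelicot Require Coquelicot.
Open Scope R_scope.

Module AMod.
Import Coquelicot.Coquelicot.

Lemma cont_inv_f (f : R -> R) : continuity f -> (forall u, 0 < u -> 0 < f u) ->
  forall z, 0 < z -> continuous (fun u => / f u) z.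
Proof.
  intros Hc Hp z Hz. apply continuity_pt_filterlim.
  apply continuity_pt_inv. apply Hc. apply Rgt_not_eq, Hp; lra.
Qed.

Lemma ball_R (y r a : R) : ball y r a -> y - r < a < y + r.
Proof.
  intro H. change (Rabs (a - y) < r) in H. apply Rabs_def2 in H. lra.
Qed.

Lemma F_deriv (f F : R -> R) : continuity f -> (forall u, 0 < u -> 0 < f u) ->
  is_F f F -> forall y, 0 < y -> derivable_pt_lim F y (- / f y).
Proof.
  intros Hc Hp HF y Hy.
  assert (Hex : forall a, 0 < a -> ex_RInt (fun u => / f u) a 1).
  { intros a Ha. apply (@ex_RInt_continuous R_CompleteNormedModule). intros z Hz.
    apply cont_inv_f; auto. assert (0 < Rmin a 1) by (apply Rmin_glb_lt; lra). lra. }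
  assert (HE : forall a, 0 < a -> F a = RInt (fun u => / f u) a 1).
  { intros a Ha. pose proof (ex_RInt_Reals_0 _ _ _ (Hex a Ha)) as pr.
    rewrite (HF a Ha pr). symmetry. apply RInt_Reals. }
  apply is_derive_Reals.
  apply (is_derive_ext_loc (fun a => RInt (fun u => / f u) a 1)).
  { exists (mkposreal y Hy). intros a Ha. apply ball_R in Ha; simpl in Ha.
    rewrite HE; [reflexivity|lra]. }
  apply (is_derive_RInt' (fun u => / f u) _ _ 1).
  { exists (mkposreal y Hy). intros a Ha. apply ball_R in Ha; simpl in Ha.
    apply (@RInt_correct R_CompleteNormedModule). apply Hex. lra. }
  apply cont_inv_f; auto.
Qed.

End AMod.
Import AMod.


Lemma cont_eps (w : R -> R) c : continuity_pt w c ->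
  forall eps, 0 < eps -> exists d, 0 < d /\ forall r, Rabs (r - c) < d -> Rabs (w r - w c) < eps.
Proof.
  intros H eps He. destruct (H eps He) as [d [Hd Hr]]. exists d; split; auto.
  intros r Hrc. destruct (Req_dec r c) as [->|Hne].
  - rewrite Rminus_diag, Rabs_R0; auto.
  - apply Hr. split; [split; [exact I|auto]|auto].
Qed.

Lemma dpl_cont (w : R -> R) c l : derivable_pt_lim w c l -> continuity_pt w c.
Proof. intro H. apply derivable_continuous_pt. exists l. exact H. Qed.

Lemma nonincr (K K' : R -> R) a b : a <= b ->
  (forall c, a <= c <= b -> derivable_pt_lim K c (K' c)) ->
  (forall c, a < c < b -> K' c <= 0) -> K b <= K a.
Proof.
  intros Hab HD Hn. destruct (Req_dec a b) as [->|Hne]; [lra|].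
  destruct (MVT_cor2 K K' a b) as [c [Hc1 Hc2]]; [lra|auto|].
  specialize (Hn c Hc2). assert (0 <= - K' c * (b - a)) by (apply Rmult_le_pos; lra). lra.
Qed.

Lemma strict_decr (K K' : R -> R) a b : a < b ->
  (forall c, a <= c <= b -> derivable_pt_lim K c (K' c)) ->
  (forall c, a < c < b -> K' c < 0) -> K b < K a.
Proof.
  intros Hab HD Hn.
  destruct (MVT_cor2 K K' a b) as [c [Hc1 Hc2]]; [lra|auto|].
  specialize (Hn c Hc2). assert (K' c * (b - a) < 0).
  { assert (0 < - K' c * (b - a)) by (apply Rmult_lt_0_compat; lra). lra. }
  lra.
Qed.

Lemma no_down (w w' : R -> R) a b : a <= b ->
  (forall c, a <= c <= b -> derivable_pt_lim w c (w' c)) -> 0 < w a ->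
  (forall c, a < c <= b -> w c = 0 -> 0 < w' c) -> 0 < w b.
Proof.
  intros Hab HD Ha Hz. destruct (Rlt_or_le 0 (w b)) as [Hb|Hb]; auto. exfalso.
  set (E := fun s => a <= s <= b /\ forall r, a <= r <= s -> 0 < w r).
  assert (Hbd : bound E) by (exists b; intros s [Hs _]; lra).
  assert (Hne : exists s, E s) by (exists a; split; [lra|intros r Hr; replace r with a by lra; auto]).
  destruct (completeness E Hbd Hne) as [c [Hub Hlub]].
  assert (Hac : a <= c) by (apply Hub; destruct Hne; unfold E; split; [lra|intros r Hr; replace r with a by lra; auto]).
  assert (Hcb : c <= b) by (apply Hlub; intros s [Hs _]; lra).
  assert (Hleft : forall r, a <= r < c -> 0 < w r).
  { intros r Hr. destruct (Classical_Prop.classic (exists s, E s /\ r <= s)) as [[s [[Hs1 Hs2] Hrs]]|Hn].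
    - apply Hs2; lra.
    - exfalso. assert (c <= r); [|lra]. apply Hlub. intros s Hs.
      destruct (Rle_or_lt s r); auto. exfalso; apply Hn; exists s; split; auto; lra. }
  assert (Hcc := dpl_cont w c (w' c) (HD c (conj Hac Hcb))).
  assert (Hc1 : w c <= 0).
  { destruct (Rle_or_lt (w c) 0) as [H|H]; auto. exfalso.
    destruct (cont_eps w c Hcc (w c) H) as [d [Hd Hr]].
    assert (Hcb' : c < b) by (destruct (Req_dec c b) as [->|]; lra).
    set (s := Rmin (c + d/2) b).
    assert (Hs : E s).
    { unfold s; split. split; [apply Rmin_glb; lra|apply Rmin_r].
      intros r Hrr. destruct (Rlt_or_le r c) as [Hrc|Hrc]; [apply Hleft; lra|].
      assert (r <= c + d/2) by (eapply Rle_trans; [apply Hrr|apply Rmin_l]).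
      assert (Rabs (r - c) < d) by (apply Rabs_def1; lra).
      specialize (Hr r H1). apply Rabs_def2 in Hr. lra. }
    specialize (Hub s Hs). unfold s in Hub.
    assert (c + d/2 <= b \/ b < c + d/2) as [Hm|Hm] by lra; [rewrite Rmin_left in Hub by lra|rewrite Rmin_right in Hub by lra]; lra. }
  assert (Hac' : a < c) by (destruct (Req_dec a c) as [<-|]; lra).
  assert (Hc2 : 0 <= w c).
  { destruct (Rle_or_lt 0 (w c)) as [H|H]; auto. exfalso.
    destruct (cont_eps w c Hcc (- w c)) as [d [Hd Hr]]; [lra|].
    set (r := Rmax a (c - d/2)).
    assert (Hr1 : a <= r < c) by (unfold r; split; [apply Rmax_l|apply Rmax_lub_lt; lra]).
    assert (Hr2 : c - d/2 <= r) by apply Rmax_r.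
    assert (Rabs (r - c) < d) by (apply Rabs_def1; lra).
    specialize (Hr r H0). apply Rabs_def2 in Hr. specialize (Hleft r Hr1). lra. }
  assert (Hw0 : w c = 0) by lra.
  assert (Hp := Hz c (conj Hac' Hcb) Hw0).
  destruct (HD c (conj Hac Hcb) (w' c) Hp) as [d Hd].
  set (h := - Rmin (d/2) ((c - a)/2)).
  assert (Hh1 : h < 0) by (unfold h; assert (0 < Rmin (d/2) ((c-a)/2)) by (apply Rmin_glb_lt; destruct d; simpl; lra); lra).
  assert (Hh2 : Rabs h < d).
  { rewrite Rabs_left by lra. unfold h. rewrite Ropp_involutive.
    destruct d as [d dp]; simpl. assert (Rmin (d/2) ((c-a)/2) <= d/2) by apply Rmin_l. lra. }
  assert (Hh3 : c - a >= 2 * - h) by (unfold h; assert (Rmin (d/2) ((c-a)/2) <= (c-a)/2) by apply Rmin_r; lra).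
  specialize (Hd h (Rlt_not_eq _ _ Hh1) Hh2). apply Rabs_def2 in Hd.
  rewrite Hw0 in Hd.
  assert (Hq : 0 < (w (c + h) - 0) / h) by lra.
  assert (0 < w (c + h)) by (apply Hleft; lra).
  assert ((w (c + h) - 0) / h < 0).
  { unfold Rdiv. rewrite Rminus_0_r. assert (0 < w (c+h) * - / h); [|lra].
    apply Rmult_lt_0_compat; auto. assert (/h < 0) by (apply Rinv_lt_0_compat; lra). lra. }
  lra.
Qed.

Lemma barrier (w w' : R -> R) T eta : 0 < eta ->
  (forall t, T < t -> derivable_pt_lim w t (w' t)) ->
  (forall t, T < t -> w t <= 0 -> eta <= w' t) ->
  exists T', forall t, T' < t -> 0 < w t.
Proof.
  intros He HD Hw.
  assert (Hex : exists t1, T < t1 /\ 0 < w t1).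
  { destruct (Classical_Prop.classic (exists t1, T < t1 /\ 0 < w t1)) as [H|Hn]; auto.
    exfalso.
    assert (Hall : forall t, T < t -> w t <= 0).
    { intros t Ht. destruct (Rle_or_lt (w t) 0); auto. exfalso; apply Hn; eauto. }
    set (t0 := T + 1). set (K := - w t0 / eta + 1).
    assert (HK : 0 < K).
    { unfold K. assert (0 <= - w t0 / eta); [|lra].
      unfold Rdiv. apply Rmult_le_pos; [|left; apply Rinv_0_lt_compat; auto].
      assert (w t0 <= 0) by (apply Hall; unfold t0; lra). lra. }
    destruct (MVT_cor2 w w' t0 (t0 + K)) as [c [Hc1 Hc2]]; [lra| intros c Hc; apply HD; unfold t0 in *; lra|].
    assert (Hwc : eta <= w' c) by (apply Hw; [unfold t0 in *; lra|apply Hall; unfold t0 in *; lra]).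
    assert (Hf : w (t0 + K) <= 0) by (apply Hall; unfold t0; lra).
    replace (t0 + K - t0) with K in Hc1 by ring.
    assert (eta * K <= w' c * K) by (apply Rmult_le_compat_r; lra).
    assert (eta * K = - w t0 + eta).
    { unfold K. field. lra. }
    lra. }
  destruct Hex as [t1 [Ht1 Hw1]]. exists t1. intros t Ht.
  apply (no_down w w' t1 t); [lra| intros c Hc; apply HD; lra | auto |].
  intros c Hc Hz. assert (eta <= w' c) by (apply Hw; lra). lra.
Qed.


Definition QM (h : R -> R) := forall k, 1 < k -> exists S, forall s s', S <= s -> s <= s' -> h s' <= k * h s.

Lemma dlin (a t : R) : derivable_pt_lim (fun t => a * t) t a.
Proof.
  pose proof (derivable_pt_lim_scal id a t 1 (derivable_pt_lim_id t)) as H.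
  rewrite Rmult_1_r in H. exact H.
Qed.

Lemma Rmax3 a b c t : Rmax a (Rmax b c) < t -> a < t /\ b < t /\ c < t.
Proof. intros H. pose proof (Rmax_l a (Rmax b c)). pose proof (Rmax_r a (Rmax b c)).
  pose proof (Rmax_l b c). pose proof (Rmax_r b c). lra. Qed.

Lemma lower_bd (u u' r h : R -> R) p T0 th k R0 eta :
  0 < p -> (forall t, T0 < t -> derivable_pt_lim u t (u' t)) ->
  (forall t, T0 < t -> u' t = 1 - r t * h t / h (u t)) ->
  (forall s, 0 < s -> 0 < h s) -> lim_infty_pinf u -> QM h ->
  (forall lam, 0 < lam -> lim_infty (fun t => h (lam * t) / h t) (Rpower lam (- p))) ->
  0 < th -> 1 < k -> 0 < eta -> 0 <= R0 ->
  (exists T1, forall t, T1 < t -> 0 <= r t <= R0) ->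
  1 - R0 * (k * k) * Rpower th p >= th + eta ->
  exists T', forall t, T' < t -> th * t < u t.
Proof.
  intros Hp HD Hu' Hh Hpinf HQ HRV Hth Hk Heta HR0 [T1 HT1] Hineq.
  set (c := Rpower th p).
  assert (Hc : 0 < c) by (unfold c, Rpower; apply exp_pos).
  assert (HcI : Rpower th (- p) = / c) by (unfold c; apply Rpower_Ropp).
  destruct (HRV th Hth (/ c - / (c * k))) as [T2 HT2].
  { assert (/ (c * k) < / c); [|lra]. apply Rinv_lt_contravar.
    apply Rmult_lt_0_compat; [|apply Rmult_lt_0_compat]; lra. nra. }
  destruct (HQ k Hk) as [S0 HS0].
  set (S := Rmax S0 1).
  assert (HS : forall s s', S <= s -> s <= s' -> h s' <= k * h s).
  { intros s s' H1 H2. apply HS0; auto. pose proof (Rmax_l S0 1). fold S in H. lra. }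
  assert (HS1 : 1 <= S) by apply Rmax_r.
  destruct (Hpinf S) as [T3 HT3].
  set (T := Rmax (Rmax T0 (Rmax T1 T2)) (Rmax T3 (Rmax 1 (S / th)))).
  assert (HT : forall t, T < t -> T0 < t /\ T1 < t /\ T2 < t /\ T3 < t /\ 1 < t /\ S / th < t).
  { intros t Ht. unfold T in Ht.
    pose proof (Rmax_l (Rmax T0 (Rmax T1 T2)) (Rmax T3 (Rmax 1 (S / th)))).
    pose proof (Rmax_r (Rmax T0 (Rmax T1 T2)) (Rmax T3 (Rmax 1 (S / th)))).
    destruct (Rmax3 T0 T1 T2 t) as [? [? ?]]; [lra|].
    destruct (Rmax3 T3 1 (S/th) t) as [? [? ?]]; [lra|]. lra. }
  destruct (barrier (fun t => u t - th * t) (fun t => u' t - th) T eta Heta) as [T' HT'].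
  - intros t Ht. destruct (HT t Ht) as [H0 _]. apply derivable_pt_lim_minus; auto.
    apply dlin.
  - intros t Ht Hw. destruct (HT t Ht) as [H0 [H1 [H2 [H3 [H4 H5]]]]].
    rewrite Hu' by auto.
    assert (Htt : 0 < t) by lra.
    assert (HSt : S <= th * t).
    { apply Rmult_lt_compat_l with (r := th) in H5; auto. unfold Rdiv in H5.
      replace (th * (S * / th)) with S in H5 by (field; lra). lra. }
    assert (Hut : S < u t) by (apply HT3; lra).
    assert (Hupos : 0 < u t) by lra.
    assert (HA := Hh t Htt). assert (HB := Hh (th * t) ltac:(nra)). assert (HU := Hh (u t) Hupos).
    assert (HBU : h (th * t) <= k * h (u t)) by (apply HS; lra).
    specialize (HT2 t H2). simpl in HT2. rewrite HcI in HT2. apply Rabs_def2 in HT2.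
    assert (HAB : h t < c * k * h (th * t)).
    { destruct HT2 as [_ HT2]. assert (/ (c * k) < h (th * t) / h t) by lra.
      apply Rmult_lt_compat_r with (r := c * k * h t) in H; [|apply Rmult_lt_0_compat; nra].
      replace (/ (c * k) * (c * k * h t)) with (h t) in H by (field; nra).
      replace (h (th * t) / h t * (c * k * h t)) with (c * k * h (th * t)) in H by (field; nra). lra. }
    assert (HAU : h t <= c * k * k * h (u t)).
    { assert (c * k * h (th * t) <= c * k * (k * h (u t))) by (apply Rmult_le_compat_l; nra). nra. }
    assert (Hq : r t * h t / h (u t) <= R0 * (k * k) * c).
    { destruct (HT1 t H1) as [Hr0 Hr1].
      apply (Rmult_le_reg_r (h (u t))); auto. unfold Rdiv. rewrite Rmult_assoc, Rinv_l, Rmult_1_r by lra.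
      assert (r t * h t <= R0 * h t) by (apply Rmult_le_compat_r; lra).
      assert (R0 * h t <= R0 * (c * k * k * h (u t))) by (apply Rmult_le_compat_l; lra).
      nra. }
    fold c in Hineq. lra.
  - exists T'. intros t Ht. specialize (HT' t Ht). simpl in HT'. lra.
Qed.

Lemma upper_bd (u u' r h : R -> R) p T0 th k R0 eta :
  0 < p -> (forall t, T0 < t -> derivable_pt_lim u t (u' t)) ->
  (forall t, T0 < t -> u' t = 1 - r t * h t / h (u t)) ->
  (forall s, 0 < s -> 0 < h s) -> lim_infty_pinf u -> QM h ->
  (forall lam, 0 < lam -> lim_infty (fun t => h (lam * t) / h t) (Rpower lam (- p))) ->
  0 < th -> 1 < k -> 0 < eta -> 0 <= R0 ->
  (exists T1, forall t, T1 < t -> R0 <= r t) ->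
  1 - R0 * Rpower th p / (k * k) <= th - eta ->
  exists T', forall t, T' < t -> u t < th * t.
Proof.
  intros Hp HD Hu' Hh Hpinf HQ HRV Hth Hk Heta HR0 [T1 HT1] Hineq.
  set (c := Rpower th p).
  assert (Hc : 0 < c) by (unfold c, Rpower; apply exp_pos).
  assert (HcI : Rpower th (- p) = / c) by (unfold c; apply Rpower_Ropp).
  destruct (HRV th Hth (k / c - / c)) as [T2 HT2].
  { unfold Rdiv. assert (/ c < k * / c); [|lra]. assert (0 < / c) by (apply Rinv_0_lt_compat; lra). nra. }
  destruct (HQ k Hk) as [S0 HS0].
  set (S := Rmax S0 1).
  assert (HS : forall s s', S <= s -> s <= s' -> h s' <= k * h s).
  { intros s s' H1 H2. apply HS0; auto. pose proof (Rmax_l S0 1). fold S in H. lra. }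
  assert (HS1 : 1 <= S) by apply Rmax_r.
  destruct (Hpinf S) as [T3 HT3].
  set (T := Rmax (Rmax T0 (Rmax T1 T2)) (Rmax T3 (Rmax 1 (S / th)))).
  assert (HT : forall t, T < t -> T0 < t /\ T1 < t /\ T2 < t /\ T3 < t /\ 1 < t /\ S / th < t).
  { intros t Ht. unfold T in Ht.
    pose proof (Rmax_l (Rmax T0 (Rmax T1 T2)) (Rmax T3 (Rmax 1 (S / th)))).
    pose proof (Rmax_r (Rmax T0 (Rmax T1 T2)) (Rmax T3 (Rmax 1 (S / th)))).
    destruct (Rmax3 T0 T1 T2 t) as [? [? ?]]; [lra|].
    destruct (Rmax3 T3 1 (S/th) t) as [? [? ?]]; [lra|]. lra. }
  destruct (barrier (fun t => th * t - u t) (fun t => th - u' t) T eta Heta) as [T' HT'].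
  - intros t Ht. destruct (HT t Ht) as [H0 _]. apply derivable_pt_lim_minus; auto.
    apply dlin.
  - intros t Ht Hw. destruct (HT t Ht) as [H0 [H1 [H2 [H3 [H4 H5]]]]].
    rewrite Hu' by auto.
    assert (Htt : 0 < t) by lra.
    assert (HSt : S <= th * t).
    { apply Rmult_lt_compat_l with (r := th) in H5; auto. unfold Rdiv in H5.
      replace (th * (S * / th)) with S in H5 by (field; lra). lra. }
    assert (Hut : S <= u t) by lra.
    assert (Hupos : 0 < u t) by lra.
    assert (HA := Hh t Htt). assert (HB := Hh (th * t) ltac:(nra)). assert (HU := Hh (u t) Hupos).
    assert (HBU : h (u t) <= k * h (th * t)) by (apply HS; lra).
    specialize (HT2 t H2). simpl in HT2. rewrite HcI in HT2. apply Rabs_def2 in HT2.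
    assert (HAB : h (th * t) < k / c * h t).
    { destruct HT2 as [HT2 _]. assert (h (th * t) / h t < k / c) by lra.
      apply Rmult_lt_compat_r with (r := h t) in H; [|lra].
      replace (h (th * t) / h t * h t) with (h (th * t)) in H by (field; nra). lra. }
    assert (HAU : c * h (u t) <= k * k * h t).
    { assert (k * h (th * t) <= k * (k / c * h t)) by (apply Rmult_le_compat_l; lra).
      replace (k * (k / c * h t)) with (k * k * h t / c) in H by (field; lra).
      apply Rmult_le_compat_l with (r := c) in H; [|lra].
      replace (c * (k * k * h t / c)) with (k * k * h t) in H by (field; lra). nra. }
    assert (Hq : R0 * c / (k * k) <= r t * h t / h (u t)).
    { specialize (HT1 t H1).
      assert (Hkk : 0 < k * k) by nra.
      assert (c / (k * k) <= h t / h (u t)).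
      { apply (Rmult_le_reg_r (k * k * h (u t))); [nra|].
        replace (c / (k * k) * (k * k * h (u t))) with (c * h (u t)) by (field; lra).
        replace (h t / h (u t) * (k * k * h (u t))) with (k * k * h t) by (field; lra). lra. }
      assert (0 <= c / (k * k)) by (unfold Rdiv; apply Rmult_le_pos; [lra|left; apply Rinv_0_lt_compat; lra]).
      replace (r t * h t / h (u t)) with (r t * (h t / h (u t))) by (field; lra).
      replace (R0 * c / (k * k)) with (R0 * (c / (k * k))) by (field; lra).
      apply Rmult_le_compat; lra. }
    fold c in Hineq. replace (R0 * c / (k * k)) with (R0 * c / (k * k)) in Hq by ring. lra.
  - exists T'. intros t Ht. specialize (HT' t Ht). simpl in HT'. lra.
Qed.

Lemma Rpower_pos a p : 0 < Rpower a p.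
Proof. unfold Rpower; apply exp_pos. Qed.

Lemma Rpower_lt1 a p : 0 < a < 1 -> 0 < p -> Rpower a p < 1.
Proof.
  intros Ha Hp. assert (E : Rpower 1 p = 1) by (unfold Rpower; rewrite ln_1, Rmult_0_r; apply exp_0).
  rewrite <- E. apply Rlt_Rpower_l; lra.
Qed.

Lemma u_pos_ev (u : R -> R) : lim_infty_pinf u -> exists T, forall t, T < t -> 0 < u t.
Proof. intros H. destruct (H 0) as [T HT]. exists T; auto. Qed.

Lemma lim_finite (u u' r h : R -> R) p T0 L Lam :
  0 < p -> (forall t, T0 < t -> derivable_pt_lim u t (u' t)) ->
  (forall t, T0 < t -> u' t = 1 - r t * h t / h (u t)) ->
  (forall s, 0 < s -> 0 < h s) -> lim_infty_pinf u -> QM h ->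
  (forall lam, 0 < lam -> lim_infty (fun t => h (lam * t) / h t) (Rpower lam (- p))) ->
  (forall t, T0 < t -> 0 <= r t) -> 0 <= L -> lim_infty r L ->
  0 < Lam <= 1 -> Lam + L * Rpower Lam p = 1 ->
  lim_infty (fun t => u t / t) Lam.
Proof.
  intros Hp HD Hu' Hh Hpinf HQ HRV Hr0 HL Hr HLam Heq eps Heps.
  assert (Hlow : exists T, forall t, T < t -> Lam - eps < u t / t).
  { destruct (Rle_or_lt (Lam - eps) 0) as [Hle|Hgt].
    - destruct (u_pos_ev u Hpinf) as [T HT]. exists (Rmax T 0). intros t Ht.
      pose proof (Rmax_l T 0). pose proof (Rmax_r T 0).
      assert (0 < u t / t) by (apply Rdiv_lt_0_compat; [apply HT|]; lra). lra.
    - set (th := Lam - eps / 2). set (m := eps / 2).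
      assert (Hth : 0 < th < 1) by (unfold th; lra).
      set (c := Rpower th p).
      assert (Hc : 0 < c < 1) by (split; [apply Rpower_pos|apply Rpower_lt1; auto]).
      assert (HcL : c < Rpower Lam p) by (apply Rlt_Rpower_l; unfold th; lra).
      set (e := Rmin 1 (m / (2 * (3 * L + 4)))).
      assert (He : 0 < e <= 1 /\ e <= m / (2 * (3 * L + 4))).
      { unfold e. split; [split|]. apply Rmin_glb_lt; [lra|]. apply Rdiv_lt_0_compat; unfold m; lra.
        apply Rmin_l. apply Rmin_r. }
      destruct (Hr e) as [T1 HT1]; [lra|].
      destruct (lower_bd u u' r h p T0 th (1 + e) (L + e) (m / 2)) as [T' HT']; auto; try lra.
      + unfold m; lra.
      + exists (Rmax T0 T1). intros t Ht. pose proof (Rmax_l T0 T1). pose proof (Rmax_r T0 T1).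
        split; [apply Hr0; lra|]. specialize (HT1 t ltac:(lra)). apply Rabs_def2 in HT1. lra.
      + fold c. 
        assert (He2 : e * (2 * (3 * L + 4)) <= m).
        { destruct He as [_ He]. apply (Rmult_le_compat_r (2 * (3 * L + 4))) in He; [|lra].
          unfold Rdiv in He. rewrite Rmult_assoc, Rinv_l, Rmult_1_r in He by lra. lra. }
        assert (Hq : Lam - th + L * (Rpower Lam p - c) >= m) by (unfold th, m; nra).
        assert ((L + e) * ((1 + e) * (1 + e)) <= L + e * (3 * L + 4)).
        { destruct He as [[He0 He1] _]. assert (e * e <= e) by nra. assert (e * e * L <= e * L) by nra.
          assert (e * e * e <= e) by nra. nra. }
        assert ((L + e) * ((1 + e) * (1 + e)) * c <= (L + e * (3 * L + 4)) * c) by (apply Rmult_le_compat_r; lra).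
        assert (e * (3 * L + 4) * c <= e * (3 * L + 4)) by (assert (0 < e * (3 * L + 4)) by nra; nra).
        nra.
      + exists (Rmax T' 0). intros t Ht. pose proof (Rmax_l T' 0). pose proof (Rmax_r T' 0).
        specialize (HT' t ltac:(lra)). assert (th < u t / t).
        { apply (Rmult_lt_reg_r t); [lra|]. unfold Rdiv. rewrite Rmult_assoc, Rinv_l, Rmult_1_r by lra. lra. }
        unfold th in *; lra. }
  assert (Hup : exists T, forall t, T < t -> u t / t < Lam + eps).
  { set (th := Lam + eps / 2). set (m := eps / 2).
    assert (Hth : 0 < th) by (unfold th; lra).
    assert (Hub : exists T', forall t, T' < t -> u t < th * t).
    { destruct (Req_dec L 0) as [HL0|HL0].
      - apply (upper_bd u u' r h p T0 th 2 0 (th - 1)); auto; try lra.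
        + rewrite HL0, Rmult_0_l, Rplus_0_r in Heq. unfold th. lra.
        + exists T0. intros; apply Hr0; auto.
      - set (c := Rpower th p).
        assert (Hc : 0 < c) by apply Rpower_pos.
        assert (HcL : Rpower Lam p < c) by (apply Rlt_Rpower_l; unfold th; lra).
        assert (HLp : 0 < L) by lra.
        set (e := Rmin (L / 2) (m / (2 * (1 + 2 * L) * c))).
        assert (He : 0 < e <= L / 2 /\ e <= m / (2 * (1 + 2 * L) * c)).
        { unfold e. split; [split|]. apply Rmin_glb_lt; [lra|]. apply Rdiv_lt_0_compat; unfold m; [lra|].
          apply Rmult_lt_0_compat; lra. apply Rmin_l. apply Rmin_r. }
        destruct (Hr e) as [T1 HT1]; [lra|].
        apply (upper_bd u u' r h p T0 th (1 + e) (L - e) (m / 2)); auto; try lra.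
        + unfold m; lra.
        + exists T1. intros t Ht. specialize (HT1 t Ht). apply Rabs_def2 in HT1. lra.
        + fold c.
          assert (He2 : e * (2 * (1 + 2 * L) * c) <= m).
          { destruct He as [_ He]. apply (Rmult_le_compat_r (2 * (1 + 2 * L) * c)) in He; [|nra].
            replace (m / (2 * (1 + 2 * L) * c) * (2 * (1 + 2 * L) * c)) with m in He by (field; nra). lra. }
          assert (Hq : th - Lam + L * (c - Rpower Lam p) >= m) by (unfold th, m; nra).
          assert (Hk : / ((1 + e) * (1 + e)) >= 1 - 2 * e).
          { apply Rle_ge. apply (Rmult_le_reg_r ((1 + e) * (1 + e))); [nra|].
            rewrite Rinv_l by nra. nra. }
          assert (H1 : (L - e) * c / ((1 + e) * (1 + e)) >= (L - e) * c * (1 - 2 * e)).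
          { unfold Rdiv. apply Rle_ge, Rmult_le_compat_l; [|lra]. apply Rmult_le_pos; lra. }
          assert ((L - e) * c * (1 - 2 * e) >= L * c - e * (1 + 2 * L) * c) by nra.
          nra. }
    destruct Hub as [T' HT']. exists (Rmax T' 0). intros t Ht. pose proof (Rmax_l T' 0). pose proof (Rmax_r T' 0).
    specialize (HT' t ltac:(lra)). assert (u t / t < th).
    { apply (Rmult_lt_reg_r t); [lra|]. unfold Rdiv. rewrite Rmult_assoc, Rinv_l, Rmult_1_r by lra. lra. }
    unfold th in *; lra. }
  destruct Hlow as [T1 HT1], Hup as [T2 HT2]. exists (Rmax T1 T2). intros t Ht.
  pose proof (Rmax_l T1 T2). pose proof (Rmax_r T1 T2).
  specialize (HT1 t ltac:(lra)). specialize (HT2 t ltac:(lra)). apply Rabs_def1; lra.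
Qed.

Lemma lim_infinite (u u' r h : R -> R) p T0 :
  0 < p -> (forall t, T0 < t -> derivable_pt_lim u t (u' t)) ->
  (forall t, T0 < t -> u' t = 1 - r t * h t / h (u t)) ->
  (forall s, 0 < s -> 0 < h s) -> lim_infty_pinf u -> QM h ->
  (forall lam, 0 < lam -> lim_infty (fun t => h (lam * t) / h t) (Rpower lam (- p))) ->
  lim_infty_pinf r ->
  lim_infty (fun t => u t / t) 0.
Proof.
  intros Hp HD Hu' Hh Hpinf HQ HRV Hr eps Heps.
  destruct (u_pos_ev u Hpinf) as [T1 HT1].
  set (th := eps / 2). set (c := Rpower th p).
  assert (Hc : 0 < c) by apply Rpower_pos.
  destruct (Hr (4 / c)) as [T2 HT2].
  destruct (upper_bd u u' r h p T0 th 2 (4 / c) (th / 2)) as [T3 HT3]; auto; try (unfold th; lra).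
  - unfold Rdiv; apply Rmult_le_pos; [lra|left; apply Rinv_0_lt_compat; lra].
  - exists T2. intros t Ht. left. auto.
  - fold c. replace (4 / c * c / (2 * 2)) with 1 by (field; lra). unfold th; lra.
  - exists (Rmax (Rmax T1 T3) 0). intros t Ht.
    pose proof (Rmax_l (Rmax T1 T3) 0). pose proof (Rmax_r (Rmax T1 T3) 0).
    pose proof (Rmax_l T1 T3). pose proof (Rmax_r T1 T3).
    specialize (HT1 t ltac:(lra)). specialize (HT3 t ltac:(lra)).
    assert (0 < u t / t) by (apply Rdiv_lt_0_compat; lra).
    assert (u t / t < th).
    { apply (Rmult_lt_reg_r t); [lra|]. unfold Rdiv. rewrite Rmult_assoc, Rinv_l, Rmult_1_r by lra. lra. }
    rewrite Rminus_0_r. apply Rabs_def1; unfold th in *; lra.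
Qed.


Lemma QMf (f phi : R -> R) delta : (forall u, 0 < u -> 0 < f u) -> 0 < delta ->
  (forall u v, 0 < u -> u <= v -> v < delta -> phi u <= phi v) ->
  lim_right0 (fun u => f u / phi u) 1 ->
  forall k, 1 < k -> exists y0, 0 < y0 /\ forall y y', 0 < y -> y <= y' -> y' < y0 -> f y <= k * f y'.
Proof.
  intros Hf Hd Hphi Hfphi k Hk.
  set (e := (k - 1) / (k + 1)).
  assert (He : 0 < e < 1) by (unfold e; split; [apply Rdiv_lt_0_compat; lra|];
    apply (Rmult_lt_reg_r (k+1)); [lra|]; unfold Rdiv; rewrite Rmult_assoc, Rinv_l by lra; lra).
  destruct (Hfphi e ltac:(lra)) as [d [Hd0 Hdd]].
  exists (Rmin d delta). split; [apply Rmin_glb_lt; lra|].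
  intros y y' Hy Hyy' Hy'. pose proof (Rmin_l d delta). pose proof (Rmin_r d delta).
  assert (H1 := Hdd y ltac:(lra)). assert (H2 := Hdd y' ltac:(lra)).
  apply Rabs_def2 in H1. apply Rabs_def2 in H2.
  assert (Hfy := Hf y Hy). assert (Hfy' := Hf y' ltac:(lra)).
  assert (Hpp : forall z, 0 < f z -> 0 < f z / phi z -> 0 < phi z).
  { intros z Hz Hq. destruct (Rlt_or_le 0 (phi z)) as [|Hn]; auto. exfalso.
    destruct Hn as [Hn|Hn].
    - assert (f z / phi z < 0); [|lra]. unfold Rdiv.
      assert (/ phi z < 0) by (apply Rinv_lt_0_compat; auto). nra.
    - rewrite Hn in Hq. unfold Rdiv in Hq. rewrite Rinv_0, Rmult_0_r in Hq. lra. }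
  assert (Hp1 : 0 < phi y) by (apply Hpp; auto; lra).
  assert (Hp2 : 0 < phi y') by (apply Hpp; auto; lra).
  assert (Hmono : phi y <= phi y') by (apply Hphi; lra).
  assert (A1 : f y < (1 + e) * phi y).
  { assert (f y / phi y < 1 + e) by lra.
    apply (Rmult_lt_compat_r (phi y)) in H3; auto. unfold Rdiv in H3.
    rewrite Rmult_assoc, Rinv_l, Rmult_1_r in H3 by lra. lra. }
  assert (A2 : (1 - e) * phi y' < f y').
  { assert (1 - e < f y' / phi y') by lra.
    apply (Rmult_lt_compat_r (phi y')) in H3; auto. unfold Rdiv in H3.
    rewrite Rmult_assoc, Rinv_l, Rmult_1_r in H3 by lra. lra. }
  assert (Hk' : k * (1 - e) = 1 + e) by (unfold e; field; lra).
  assert ((1 + e) * phi y <= (1 + e) * phi y') by (apply Rmult_le_compat_l; lra).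
  assert (k * ((1 - e) * phi y') <= k * f y') by (apply Rmult_le_compat_l; lra).
  nra.
Qed.

Lemma QMh (f phi F Finv : R -> R) delta :
  (forall u, 0 < u -> 0 < f u) -> 0 < delta ->
  (forall u v, 0 < u -> u <= v -> v < delta -> phi u <= phi v) ->
  lim_right0 (fun u => f u / phi u) 1 ->
  (forall t, 0 <= t -> 0 < Finv t /\ F (Finv t) = t) ->
  (forall a b, 0 < a -> a < b -> F b < F a) ->
  QM (fun s => f (Finv s)).
Proof.
  intros Hf Hd Hphi Hfphi HFinv Hdec k Hk.
  destruct (QMf f phi delta Hf Hd Hphi Hfphi k Hk) as [y0 [Hy0 Hq]].
  exists (Rmax (F y0) 0 + 1). intros s s' Hs Hss'.
  pose proof (Rmax_l (F y0) 0). pose proof (Rmax_r (F y0) 0).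
  destruct (HFinv s ltac:(lra)) as [P1 E1]. destruct (HFinv s' ltac:(lra)) as [P2 E2].
  assert (L1 : Finv s < y0).
  { destruct (Rlt_or_le (Finv s) y0) as [|Hn]; auto. exfalso.
    destruct Hn as [Hn|Hn]. - specialize (Hdec y0 (Finv s) Hy0 Hn). lra.
    - rewrite <- Hn in E1. lra. }
  assert (L2 : Finv s' <= Finv s).
  { destruct (Rle_or_lt (Finv s') (Finv s)) as [|Hn]; auto. exfalso.
    specialize (Hdec (Finv s) (Finv s') P1 Hn). lra. }
  apply Hq; lra.
Qed.


Lemma Rabs_le_inv' a b : Rabs a <= b -> - b <= a <= b.
Proof. intros H. pose proof (Rle_abs a). pose proof (Rle_abs (- a)). rewrite Rabs_Ropp in H1. lra. Qed.

Lemma F_RV (f F : R -> R) mu beta : 0 < mu ->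
  (forall u, 0 < u -> 0 < f u) ->
  (forall y, 0 < y -> derivable_pt_lim F y (- / f y)) ->
  (forall M, exists d, 0 < d /\ forall y, 0 < y < d -> M < F y) ->
  lim_right0 (fun y => f (mu * y) / f y) (Rpower mu beta) ->
  lim_right0 (fun y => F (mu * y) / F y) (Rpower mu (1 - beta)).
Proof.
  intros Hmu Hf HD Hinf Hrv eps Heps.
  set (c := Rpower mu (1 - beta)). set (b := Rpower mu beta).
  assert (Hc : 0 < c) by apply Rpower_pos. assert (Hb : 0 < b) by apply Rpower_pos.
  assert (Hcb : c = mu / b).
  { unfold c, b. replace (1 - beta) with (1 + - beta) by ring. rewrite Rpower_plus, Rpower_Ropp, Rpower_1 by lra.
    reflexivity. }
  set (e1 := eps / (3 * c)).
  assert (He1 : 0 < e1) by (unfold e1; apply Rdiv_lt_0_compat; lra).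
  set (eta := Rmin (b / 2) (e1 * b / 2)).
  assert (Heta : 0 < eta) by (unfold eta; apply Rmin_glb_lt; nra).
  destruct (Hrv eta Heta) as [d1 [Hd1 Hrv1]].
  set (G := fun y => F (mu * y) - c * F y).
  set (G' := fun y => mu * (- / f (mu * y)) - c * (- / f y)).
  assert (HG : forall y, 0 < y -> derivable_pt_lim G y (G' y)).
  { intros y Hy. unfold G, G'. apply derivable_pt_lim_minus.
    - replace (mu * - / f (mu * y)) with (- / f (mu * y) * mu) by ring.
      apply (derivable_pt_lim_comp (fun y => mu * y) F y mu). apply dlin. apply HD. nra.
    - apply derivable_pt_lim_scal. apply HD; auto. }
  assert (HGb : forall y, 0 < y < d1 -> Rabs (G' y) <= e1 * c * / f y).
  { intros y Hy. specialize (Hrv1 y Hy). cbv beta in Hrv1. fold b in Hrv1. apply Rabs_def2 in Hrv1.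
    assert (Hfy := Hf y ltac:(lra)). assert (Hfm := Hf (mu * y) ltac:(nra)).
    set (rho := f (mu * y) / f y) in Hrv1.
    assert (Heta1 : eta <= b / 2) by apply Rmin_l. assert (Heta2 : eta <= e1 * b / 2) by apply Rmin_r.
    assert (Hrho : b / 2 <= rho) by lra.
    assert (E : G' y = c / f y * (1 - b / rho)).
    { unfold G', rho. rewrite Hcb. field. repeat split; unfold rho in *; try lra. }
    rewrite E. rewrite Rabs_mult. rewrite Rabs_right by (apply Rle_ge; unfold Rdiv; apply Rmult_le_pos; [lra|left; apply Rinv_0_lt_compat; lra]).
    assert (Habs : Rabs (1 - b / rho) <= e1).
    { replace (1 - b / rho) with ((rho - b) / rho) by (field; lra).
      unfold Rdiv. rewrite Rabs_mult, Rabs_inv by lra. rewrite (Rabs_right rho) by lra.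
      apply (Rmult_le_reg_r rho); [lra|]. rewrite Rmult_assoc, Rinv_l, Rmult_1_r by lra.
      assert (Rabs (rho - b) <= e1 * b / 2) by (apply Rabs_le; lra). nra. }
    assert (0 < c / f y) by (apply Rdiv_lt_0_compat; lra).
    replace (e1 * c * / f y) with (c / f y * e1) by (unfold Rdiv; ring).
    apply Rmult_le_compat_l; lra. }
  set (y1 := d1 / 2).
  destruct (Hinf ((Rabs (G y1) + e1 * c * Rabs (F y1)) / (e1 * c) + 1)) as [d2 [Hd2 Hinf2]].
  exists (Rmin y1 d2). split; [apply Rmin_glb_lt; unfold y1; lra|].
  intros y Hy. pose proof (Rmin_l y1 d2). pose proof (Rmin_r y1 d2).
  assert (Hyy1 : y < y1) by lra.
  assert (K1 : G y1 + e1 * c * F y1 <= G y + e1 * c * F y).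
  { apply (nonincr (fun z => G z + e1 * c * F z) (fun z => G' z + e1 * c * (- / f z))); [lra| |].
    - intros z Hz. apply derivable_pt_lim_plus. apply HG; lra. apply derivable_pt_lim_scal, HD; lra.
    - intros z Hz. assert (HH := HGb z ltac:(unfold y1 in *; lra)). apply Rabs_le_inv' in HH. lra. }
  assert (K2 : G y - e1 * c * F y <= G y1 - e1 * c * F y1).
  { cut (- (G y1 - e1 * c * F y1) <= - (G y - e1 * c * F y)); [lra|].
    apply (nonincr (fun z => - (G z - e1 * c * F z)) (fun z => - (G' z - e1 * c * (- / f z)))); [lra| |].
    - intros z Hz. apply derivable_pt_lim_opp, derivable_pt_lim_minus. apply HG; lra. apply derivable_pt_lim_scal, HD; lra.
    - intros z Hz. assert (HH := HGb z ltac:(unfold y1 in *; lra)). apply Rabs_le_inv' in HH. lra. }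
  assert (HFy := Hinf2 y ltac:(lra)).
  set (A := Rabs (G y1) + e1 * c * Rabs (F y1)) in HFy.
  assert (Hec : 0 < e1 * c) by (apply Rmult_lt_0_compat; lra).
  assert (HA : 0 <= A) by (unfold A; pose proof (Rabs_pos (G y1)); pose proof (Rabs_pos (F y1));
    assert (0 <= e1 * c * Rabs (F y1)) by (apply Rmult_le_pos; lra); lra).
  assert (HAF : A < e1 * c * F y).
  { assert (A / (e1 * c) < F y) by (assert (0 <= A / (e1 * c)) by (apply Rmult_le_pos; [lra|left; apply Rinv_0_lt_compat; lra]); lra).
    apply (Rmult_lt_compat_l (e1 * c)) in H1; auto.
    replace (e1 * c * (A / (e1 * c))) with A in H1 by (field; lra). lra. }
  assert (HFpos : 0 < F y) by nra.
  assert (HGy : Rabs (G y) <= A + e1 * c * F y).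
  { apply Rabs_le. pose proof (Rle_abs (G y1)). pose proof (Rle_abs (- G y1)). rewrite Rabs_Ropp in H2.
    pose proof (Rle_abs (F y1)). pose proof (Rle_abs (- F y1)). rewrite Rabs_Ropp in H4.
    unfold A. split; nra. }
  replace (F (mu * y) / F y - c) with (G y / F y) by (unfold G; field; lra).
  unfold Rdiv. rewrite Rabs_mult, Rabs_inv, (Rabs_right (F y)) by lra.
  apply (Rmult_lt_reg_r (F y)); auto. rewrite Rmult_assoc, Rinv_l, Rmult_1_r by lra.
  assert (e1 * c * 3 = eps) by (unfold e1; field; lra). nra.
Qed.

Lemma Rpower_neg_decr a b q : 0 < a < b -> q < 0 -> Rpower b q < Rpower a q.
Proof.
  intros Hab Hq. replace q with (- (- q)) by ring. rewrite (Rpower_Ropp a (- q)), (Rpower_Ropp b (- q)).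
  apply Rinv_lt_contravar. apply Rmult_lt_0_compat; apply Rpower_pos.
  apply Rlt_Rpower_l; lra.
Qed.

Lemma Finv_RV (F Finv : R -> R) beta lam : 1 < beta -> 0 < lam ->
  (forall a b, 0 < a -> a < b -> F b < F a) ->
  (forall t, 0 <= t -> 0 < Finv t /\ F (Finv t) = t) ->
  (forall y0, 0 < y0 -> exists T, forall t, T < t -> Finv t < y0) ->
  (forall mu, 0 < mu -> lim_right0 (fun y => F (mu * y) / F y) (Rpower mu (1 - beta))) ->
  lim_infty (fun t => Finv (lam * t) / Finv t) (Rpower lam (- / (beta - 1))).
Proof.
  intros Hb Hl Hdec HFinv H0 HRV eps Heps.
  set (mu0 := Rpower lam (- / (beta - 1))).
  assert (Hmu0 : 0 < mu0) by apply Rpower_pos.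
  assert (Hm0 : Rpower mu0 (1 - beta) = lam).
  { unfold mu0. rewrite Rpower_mult. replace (- / (beta - 1) * (1 - beta)) with 1 by (field; lra).
    apply Rpower_1; auto. }
  assert (Hle : forall a b, 0 < a -> a <= b -> F b <= F a).
  { intros a b Ha Hab. destruct Hab as [Hab|Hab]; [left; apply Hdec; auto|rewrite Hab; right; reflexivity]. }
  set (mu2 := mu0 + eps / 2).
  assert (Hg2 : Rpower mu2 (1 - beta) < lam) by (rewrite <- Hm0; apply Rpower_neg_decr; unfold mu2; lra).
  destruct (HRV mu2 ltac:(unfold mu2; lra) (lam - Rpower mu2 (1 - beta)) ltac:(lra)) as [d2 [Hd2 HR2]].
  destruct (H0 d2 Hd2) as [T2 HT2].
  assert (Hup : forall t, Rmax T2 0 < t -> Finv (lam * t) / Finv t < mu2).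
  { intros t Ht. pose proof (Rmax_l T2 0). pose proof (Rmax_r T2 0).
    destruct (HFinv t ltac:(lra)) as [P1 E1]. destruct (HFinv (lam * t) ltac:(nra)) as [P2 E2].
    specialize (HR2 (Finv t) (conj P1 (HT2 t ltac:(lra)))). cbv beta in HR2. apply Rabs_def2 in HR2.
    rewrite E1 in HR2.
    assert (F (mu2 * Finv t) < lam * t).
    { assert (Hx : F (mu2 * Finv t) / t < lam) by lra.
      apply (Rmult_lt_compat_r t) in Hx; [|lra]. unfold Rdiv in Hx.
      rewrite Rmult_assoc, Rinv_l, Rmult_1_r in Hx by lra. lra. }
    assert (Finv (lam * t) < mu2 * Finv t).
    { destruct (Rlt_or_le (Finv (lam * t)) (mu2 * Finv t)) as [|Hn]; auto.
      assert (Hy : 0 < mu2 * Finv t) by (apply Rmult_lt_0_compat; unfold mu2; lra).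
      specialize (Hle _ _ Hy Hn). lra. }
    apply (Rmult_lt_reg_r (Finv t)); auto. unfold Rdiv. rewrite Rmult_assoc, Rinv_l, Rmult_1_r by lra. lra. }
  assert (Hlow : exists T, forall t, T < t -> mu0 - eps < Finv (lam * t) / Finv t).
  { destruct (Rle_or_lt (mu0 - eps) 0) as [Hn|Hp].
    - exists 0. intros t Ht. destruct (HFinv t ltac:(lra)) as [P1 _]. destruct (HFinv (lam * t) ltac:(nra)) as [P2 _].
      assert (0 < Finv (lam * t) / Finv t) by (apply Rdiv_lt_0_compat; auto). lra.
    - set (mu1 := mu0 - eps / 2).
      assert (Hg1 : lam < Rpower mu1 (1 - beta)) by (rewrite <- Hm0; apply Rpower_neg_decr; unfold mu1; lra).
      destruct (HRV mu1 ltac:(unfold mu1; lra) (Rpower mu1 (1 - beta) - lam) ltac:(lra)) as [d1 [Hd1 HR1]].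
      destruct (H0 d1 Hd1) as [T1 HT1].
      exists (Rmax T1 0). intros t Ht. pose proof (Rmax_l T1 0). pose proof (Rmax_r T1 0).
      destruct (HFinv t ltac:(lra)) as [P1 E1]. destruct (HFinv (lam * t) ltac:(nra)) as [P2 E2].
      specialize (HR1 (Finv t) (conj P1 (HT1 t ltac:(lra)))). cbv beta in HR1. apply Rabs_def2 in HR1.
      rewrite E1 in HR1.
      assert (lam * t < F (mu1 * Finv t)).
      { assert (Hx : lam < F (mu1 * Finv t) / t) by lra.
        apply (Rmult_lt_compat_r t) in Hx; [|lra]. unfold Rdiv in Hx.
        rewrite Rmult_assoc, Rinv_l, Rmult_1_r in Hx by lra. lra. }
      assert (mu1 * Finv t < Finv (lam * t)).
      { destruct (Rlt_or_le (mu1 * Finv t) (Finv (lam * t))) as [|Hn]; auto.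
        specialize (Hle _ _ P2 Hn). lra. }
      assert (mu1 < Finv (lam * t) / Finv t).
      { apply (Rmult_lt_reg_r (Finv t)); auto. unfold Rdiv. rewrite Rmult_assoc, Rinv_l, Rmult_1_r by lra. lra. }
      unfold mu1 in *; lra. }
  destruct Hlow as [T1 HT1]. exists (Rmax T1 (Rmax T2 0)). intros t Ht.
  pose proof (Rmax_l T1 (Rmax T2 0)). pose proof (Rmax_r T1 (Rmax T2 0)).
  specialize (HT1 t ltac:(lra)). specialize (Hup t ltac:(lra)). fold mu0. apply Rabs_def1; unfold mu2 in *; lra.
Qed.

Lemma div_lt_iff a b c : 0 < b -> (a / b < c <-> a < c * b).
Proof. intros Hb. split; intro H.
  - apply (Rmult_lt_compat_r b) in H; auto. unfold Rdiv in H. rewrite Rmult_assoc, Rinv_l, Rmult_1_r in H by lra. lra.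
  - apply (Rmult_lt_reg_r b); auto. unfold Rdiv. rewrite Rmult_assoc, Rinv_l, Rmult_1_r by lra. lra. Qed.

Lemma lt_div_iff a b c : 0 < b -> (c < a / b <-> c * b < a).
Proof. intros Hb. split; intro H.
  - apply (Rmult_lt_compat_r b) in H; auto. unfold Rdiv in H. rewrite Rmult_assoc, Rinv_l, Rmult_1_r in H by lra. lra.
  - apply (Rmult_lt_reg_r b); auto. unfold Rdiv. rewrite Rmult_assoc, Rinv_l, Rmult_1_r by lra. lra. Qed.

Lemma h_RV (f Finv : R -> R) beta lam mu0 : 0 < lam -> 0 < mu0 ->
  (forall u, 0 < u -> 0 < f u) ->
  (forall l, 0 < l -> lim_right0 (fun y => f (l * y) / f y) (Rpower l beta)) ->
  (forall k, 1 < k -> exists y0, 0 < y0 /\ forall y y', 0 < y -> y <= y' -> y' < y0 -> f y <= k * f y') ->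
  (forall t, 0 <= t -> 0 < Finv t) ->
  (forall y0, 0 < y0 -> exists T, forall t, T < t -> Finv t < y0) ->
  lim_infty (fun t => Finv (lam * t) / Finv t) mu0 ->
  lim_infty (fun t => f (Finv (lam * t)) / f (Finv t)) (Rpower mu0 beta).
Proof.
  intros Hl Hmu0 Hf HRV HQ HFp H0 Hrat eps0 Heps0.
  set (T0 := Rpower mu0 beta). assert (HT0 : 0 < T0) by apply Rpower_pos.
  set (eps := Rmin eps0 T0).
  assert (Heps : 0 < eps <= T0 /\ eps <= eps0) by (unfold eps; split; [split; [apply Rmin_glb_lt; lra|apply Rmin_r]|apply Rmin_l]).
  assert (Hcont := dpl_cont _ _ _ (derivable_pt_lim_power mu0 beta Hmu0)).
  destruct (cont_eps _ _ Hcont (eps / 4) ltac:(lra)) as [a0 [Ha0 Hc]].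
  set (a := Rmin (a0 / 2) (mu0 / 2)).
  assert (Ha : 0 < a /\ a <= a0 / 2 /\ a <= mu0 / 2) by (unfold a; split; [apply Rmin_glb_lt; lra|split; [apply Rmin_l|apply Rmin_r]]).
  set (mu1 := mu0 - a). set (mu2 := mu0 + a).
  assert (Hm1 : Rpower mu1 beta > T0 - eps / 4).
  { assert (HH := Hc mu1 ltac:(apply Rabs_def1; unfold mu1; lra)). apply Rabs_def2 in HH. fold T0 in HH. lra. }
  assert (Hm2 : Rpower mu2 beta < T0 + eps / 4).
  { assert (HH := Hc mu2 ltac:(apply Rabs_def1; unfold mu2; lra)). apply Rabs_def2 in HH. fold T0 in HH. lra. }
  set (k0 := eps / (4 * (T0 + 1))). assert (Hk0 : 0 < k0) by (unfold k0; apply Rdiv_lt_0_compat; lra).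
  assert (Hk0' : k0 * (T0 + 1) = eps / 4) by (unfold k0; field; lra).
  destruct (HQ (1 + k0) ltac:(lra)) as [y0 [Hy0 HQ1]].
  destruct (HRV mu1 ltac:(unfold mu1; lra) (eps / 4) ltac:(lra)) as [d1 [Hd1 HR1]].
  destruct (HRV mu2 ltac:(unfold mu2; lra) (eps / 4) ltac:(lra)) as [d2 [Hd2 HR2]].
  destruct (Hrat a ltac:(lra)) as [T1 HT1].
  set (y1 := Rmin (y0 / mu2) (Rmin d1 d2)).
  assert (Hy1 : 0 < y1) by (unfold y1; repeat apply Rmin_glb_lt; try lra; apply Rdiv_lt_0_compat; unfold mu2; lra).
  destruct (H0 y1 Hy1) as [T2 HT2].
  exists (Rmax (Rmax T1 T2) 0). intros t Ht.
  pose proof (Rmax_l (Rmax T1 T2) 0). pose proof (Rmax_r (Rmax T1 T2) 0). pose proof (Rmax_l T1 T2). pose proof (Rmax_r T1 T2).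
  set (y := Finv t). set (z := Finv (lam * t)).
  assert (Hy : 0 < y) by (apply HFp; lra). assert (Hz : 0 < z) by (apply HFp; nra).
  assert (Hyy1 : y < y1) by (apply HT2; lra).
  assert (Hy1a : y1 <= y0 / mu2) by apply Rmin_l.
  assert (Hy1b : y1 <= d1) by (eapply Rle_trans; [apply Rmin_r|apply Rmin_l]).
  assert (Hy1c : y1 <= d2) by (eapply Rle_trans; [apply Rmin_r|apply Rmin_r]).
  specialize (HT1 t ltac:(lra)). cbv beta in HT1. fold y z in HT1. apply Rabs_def2 in HT1.
  assert (Hzl : mu1 * y < z).
  { assert (Hq : mu1 < z / y) by (unfold mu1; lra). apply (proj1 (lt_div_iff z y mu1 Hy)) in Hq. lra. }
  assert (Hzu : z < mu2 * y).
  { assert (Hq : z / y < mu2) by (unfold mu2; lra). apply (proj1 (div_lt_iff z y mu2 Hy)) in Hq. lra. }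
  assert (Hmy : mu2 * y < y0).
  { assert (Hq : y < y0 / mu2) by lra. apply (proj1 (lt_div_iff y0 mu2 y ltac:(unfold mu2; lra))) in Hq. lra. }
  assert (Hf1 : f (mu1 * y) <= (1 + k0) * f z) by (apply HQ1; try lra; apply Rmult_lt_0_compat; unfold mu1; lra).
  assert (Hf2 : f z <= (1 + k0) * f (mu2 * y)) by (apply HQ1; lra).
  specialize (HR1 y ltac:(lra)). specialize (HR2 y ltac:(lra)). cbv beta in HR1, HR2.
  apply Rabs_def2 in HR1. apply Rabs_def2 in HR2.
  assert (Hfy := Hf y Hy). assert (Hfz := Hf z Hz).
  assert (Hfm1 := Hf (mu1 * y) ltac:(apply Rmult_lt_0_compat; unfold mu1; lra)).
  assert (Hfm2 := Hf (mu2 * y) ltac:(apply Rmult_lt_0_compat; unfold mu2; lra)).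
  assert (U1 : f (mu2 * y) < (T0 + eps / 2) * f y) by (apply div_lt_iff; auto; lra).
  assert (L1 : (T0 - eps / 2) * f y < f (mu1 * y)) by (apply lt_div_iff; auto; lra).
  cut (T0 - eps < f z / f y < T0 + eps).
  { intros [? ?]. apply Rabs_def1; fold T0; lra. }
  split.
  - apply lt_div_iff; auto.
    assert ((T0 - eps / 2) * f y < (1 + k0) * f z) by lra.
    assert (k0 * ((T0 - eps/2) * f y) <= eps / 4 * f y).
    { rewrite <- Hk0'. assert (0 <= T0 - eps/2) by lra. 
      assert ((T0 - eps/2) * f y <= (T0 + 1) * f y) by (apply Rmult_le_compat_r; lra).
      rewrite Rmult_assoc. apply Rmult_le_compat_l; lra. }
    assert (Hkz : (1 + k0) * ((T0 - eps) * f y) <= (T0 - eps/2) * f y).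
    { assert (0 <= k0 * (T0 - eps)) by (apply Rmult_le_pos; lra). nra. }
    nra.
  - apply div_lt_iff; auto.
    assert (f z < (1 + k0) * ((T0 + eps / 2) * f y)) by nra.
    assert (k0 * ((T0 + eps / 2) * f y) <= eps / 2 * f y).
    { assert ((T0 + eps/2) * f y <= 2 * ((T0 + 1) * f y)) by nra.
      assert (Hq : k0 * ((T0 + eps / 2) * f y) <= k0 * (2 * ((T0 + 1) * f y))) by (apply Rmult_le_compat_l; lra).
      replace (k0 * (2 * ((T0 + 1) * f y))) with (2 * (k0 * (T0 + 1)) * f y) in Hq by ring. rewrite Hk0' in Hq. lra. }
    nra.
Qed.


Lemma caseI_RV (f F Finv : R -> R) beta : 1 < beta ->
  (forall u, 0 < u -> 0 < f u) ->
  (forall y, 0 < y -> derivable_pt_lim F y (- / f y)) ->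
  (forall a b, 0 < a -> a < b -> F b < F a) ->
  (forall t, 0 <= t -> 0 < Finv t /\ F (Finv t) = t) ->
  (forall y0, 0 < y0 -> exists T, forall t, T < t -> Finv t < y0) ->
  (forall M, exists d, 0 < d /\ forall y, 0 < y < d -> M < F y) ->
  (forall k, 1 < k -> exists y0, 0 < y0 /\ forall y y', 0 < y -> y <= y' -> y' < y0 -> f y <= k * f y') ->
  RV0 beta f ->
  forall lam, 0 < lam -> lim_infty (fun t => f (Finv (lam * t)) / f (Finv t)) (Rpower lam (- (beta / (beta - 1)))).
Proof.
  intros Hb Hfp HFd Hdec HFinv HF0 Hinf HQ [_ Hrv] lam Hl.
  assert (HFRV : forall mu, 0 < mu -> lim_right0 (fun y => F (mu * y) / F y) (Rpower mu (1 - beta))).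
  { intros mu Hmu. apply (F_RV f F mu beta); auto. }
  pose proof (Finv_RV F Finv beta lam Hb Hl Hdec HFinv HF0 HFRV) as Hrat.
  replace (Rpower lam (- (beta / (beta - 1)))) with (Rpower (Rpower lam (- / (beta - 1))) beta).
  - apply (h_RV f Finv beta lam); auto. apply Rpower_pos. intros t Ht; apply HFinv; auto.
  - rewrite Rpower_mult. f_equal. field. lra.
Qed.

Lemma lim_right0_unique (g : R -> R) a b : lim_right0 g a -> lim_right0 g b -> a = b.
Proof.
  intros Ha Hb. destruct (Req_dec a b) as [|Hne]; auto. exfalso.
  set (e := Rabs (a - b) / 2). assert (He : 0 < e) by (unfold e; apply Rdiv_lt_0_compat; [apply Rabs_pos_lt; lra|lra]).
  destruct (Ha e He) as [d1 [Hd1 H1]]. destruct (Hb e He) as [d2 [Hd2 H2]].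
  set (y := Rmin d1 d2 / 2). assert (0 < Rmin d1 d2) by (apply Rmin_glb_lt; lra).
  pose proof (Rmin_l d1 d2). pose proof (Rmin_r d1 d2).
  specialize (H1 y ltac:(unfold y; lra)). specialize (H2 y ltac:(unfold y; lra)).
  pose proof (Rabs_triang (g y - b) (a - g y)). replace (g y - b + (a - g y)) with (a - b) in H4 by ring.
  rewrite <- Rabs_Ropp in H2. replace (- (g y - b)) with (b - g y) in H2 by ring.
  rewrite <- Rabs_Ropp in H1. replace (- (g y - a)) with (a - g y) in H1 by ring.
  rewrite <- Rabs_Ropp, Ropp_minus_distr in H2.
  unfold e in *. lra.
Qed.

Lemma lim_infty_unique (g : R -> R) a b : lim_infty g a -> lim_infty g b -> a = b.
Proof.
  intros Ha Hb. destruct (Req_dec a b) as [|Hne]; auto. exfalso.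
  set (e := Rabs (a - b) / 2). assert (He : 0 < e) by (unfold e; apply Rdiv_lt_0_compat; [apply Rabs_pos_lt; lra|lra]).
  destruct (Ha e He) as [T1 H1]. destruct (Hb e He) as [T2 H2].
  set (y := Rmax T1 T2 + 1).
  pose proof (Rmax_l T1 T2). pose proof (Rmax_r T1 T2).
  specialize (H1 y ltac:(unfold y; lra)). specialize (H2 y ltac:(unfold y; lra)).
  pose proof (Rabs_triang (g y - b) (a - g y)). replace (g y - b + (a - g y)) with (a - b) in H3 by ring.
  rewrite <- Rabs_Ropp in H1. replace (- (g y - a)) with (a - g y) in H1 by ring.
  unfold e in *. lra.
Qed.

Lemma Rpower_inj2 a b : Rpower 2 a = Rpower 2 b -> a = b.
Proof.
  unfold Rpower. intros H. apply exp_inv in H.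
  assert (0 < ln 2) by (rewrite <- ln_1; apply ln_increasing; lra).
  apply (Rmult_eq_reg_r (ln 2)); lra.
Qed.

Lemma root_exists L p : 0 < L -> 1 < p -> exists Lam, 0 < Lam < 1 /\ Lam + L * Rpower Lam p = 1.
Proof.
  intros HL Hp.
  set (k := fun m => m + L * Rpower m p - 1).
  set (a := Rmin (1/2) (1 / (2 * (L + 1)))).
  assert (Ha : 0 < a <= 1/2 /\ a <= 1 / (2 * (L + 1))).
  { unfold a. split; [split|]. apply Rmin_glb_lt; [lra|apply Rdiv_lt_0_compat; lra]. apply Rmin_l. apply Rmin_r. }
  assert (Hap : Rpower a p <= a).
  { assert (E : Rpower a 1 = a) by (apply Rpower_1; lra).
    assert (Rpower a p < Rpower a 1); [|lra].
    unfold Rpower. apply exp_increasing.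
    assert (ln a < 0) by (rewrite <- ln_1; apply ln_increasing; lra). nra. }
  assert (HLa : L * a < 1 / 2).
  { destruct Ha as [_ Ha2]. apply (Rmult_le_compat_l L) in Ha2; [|lra].
    assert (L * (1 / (2 * (L + 1))) < 1/2); [|lra].
    replace (L * (1 / (2 * (L + 1)))) with (L / (2 * (L + 1))) by (field; lra).
    apply div_lt_iff; lra. }
  assert (Hka : k a < 0).
  { unfold k. assert (L * Rpower a p <= L * a) by (apply Rmult_le_compat_l; lra). lra. }
  assert (R1 : Rpower 1 p = 1) by (unfold Rpower; rewrite ln_1, Rmult_0_r; apply exp_0).
  assert (Hk1 : 0 < k 1) by (unfold k; rewrite R1; lra).
  destruct (Ranalysis5.IVT_interv k a 1) as [z [Hz1 Hz2]]; auto; try lra.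
  - intros m Hm. unfold k. apply continuity_pt_minus; [|apply continuity_pt_const; intros ? ?; auto].
    apply continuity_pt_plus; [apply derivable_continuous_pt, derivable_pt_id|].
    apply continuity_pt_scal. apply (dpl_cont _ _ _ (derivable_pt_lim_power m p ltac:(lra))).
  - exists z. unfold k in Hz2. split; [split|]; try lra.
    destruct Hz1 as [_ [Hz1|Hz1]]; auto. rewrite Hz1, R1 in Hz2; lra.
Qed.

Lemma root_mono L p m m' : 0 <= L -> 0 < p -> 0 < m < m' -> m + L * Rpower m p < m' + L * Rpower m' p.
Proof.
  intros HL Hp Hm. assert (Rpower m p < Rpower m' p) by (apply Rlt_Rpower_l; lra). nra.
Qed.


Theorem theorem5
  (f g F Finv x phi : R -> R) (xi delta : R)
  (* standing assumptions *)
  (Hfc : continuity f) (Hflip : loc_lipschitz f) (Hf0 : f 0 = 0)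
  (Hfsign : forall u, u <> 0 -> 0 < u * f u)
  (Hgc : forall t, 0 < t -> continuity_pt g t)
  (Hgc0 : forall eps, 0 < eps -> exists d, 0 < d /\
            forall t, 0 <= t < d -> Rabs (g t - g 0) < eps)
  (Hgpos : forall t, 0 < t -> 0 < g t)
  (Hxi : 0 < xi)
  (HF : is_F f F)
  (* F^{-1}, defined on [0,oo) (with values in (0,1]) *)
  (HFinv : forall t, 0 <= t -> 0 < Finv t /\ F (Finv t) = t)
  (* x is the continuous solution of x' = -f(x) + g, x(0) = xi *)
  (Hx0 : x 0 = xi)
  (Hxc0 : forall eps, 0 < eps -> exists d, 0 < d /\
            forall t, 0 <= t < d -> Rabs (x t - xi) < eps)
  (Hxd : forall t, 0 < t -> derivable_pt_lim x t (- f (x t) + g t))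
  (* regular variation hypothesis *)
  (HRV : (exists beta, 1 < beta /\ RV0 beta f) \/ RVinf (-1) (fun t => f (Finv t)))
  (* phi increasing on (0,delta), f ~ phi at 0+ *)
  (Hdelta : 0 < delta)
  (Hphi : forall u v, 0 < u -> u <= v -> v < delta -> phi u <= phi v)
  (Hfphi : lim_right0 (fun u => f u / phi u) 1)
  (* x(t) -> 0 *)
  (Hxlim : lim_infty x 0) :
  let ratio := fun t => g t / f (Finv t) in
  let Fx := fun t => F (x t) / t in
  (* (i) L = 0 *)
  (lim_infty ratio 0 -> lim_infty Fx 1) /\
  (* (ii) L in (0,oo) *)
  (forall L, 0 < L -> lim_infty ratio L ->
     exists Lam, 0 < Lam < 1 /\ lim_infty Fx Lam /\
       (forall beta, 1 < beta -> RV0 beta f ->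
          (1 - Lam) * Rpower Lam (- (beta / (beta - 1))) = L /\
          (forall mu, 0 < mu < 1 ->
             (1 - mu) * Rpower mu (- (beta / (beta - 1))) = L -> mu = Lam)) /\
       (RVinf (-1) (fun t => f (Finv t)) -> Lam = 1 / (1 + L))) /\
  (* (iii) L = oo *)
  (lim_infty_pinf ratio -> lim_infty Fx 0).
Proof.
  intros ratio Fx.
  assert (Hfp : forall u, 0 < u -> 0 < f u).
  { intros u Hu. specialize (Hfsign u ltac:(lra)). nra. }
  pose proof (F_deriv f F Hfc Hfp HF) as HFd.
  assert (Hdec : forall a b, 0 < a -> a < b -> F b < F a).
  { intros a b Ha Hab. apply (strict_decr F (fun y => - / f y) a b Hab).
    - intros c Hc. apply HFd. lra.
    - intros c Hc. assert (0 < / f c) by (apply Rinv_0_lt_compat, Hfp; lra). lra. }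
  assert (Hinf0 : forall M, exists d, 0 < d /\ forall y, 0 < y < d -> M < F y).
  { intros M. set (t := Rmax M 0 + 1). pose proof (Rmax_l M 0). pose proof (Rmax_r M 0).
    destruct (HFinv t ltac:(unfold t; lra)) as [P E]. exists (Finv t). split; auto.
    intros y Hy. specialize (Hdec y (Finv t) (proj1 Hy) (proj2 Hy)). unfold t in *; lra. }
  assert (HF0 : forall y0, 0 < y0 -> exists T, forall t, T < t -> Finv t < y0).
  { intros y0 Hy0. exists (Rmax (F y0) 0). intros t Ht. pose proof (Rmax_l (F y0) 0). pose proof (Rmax_r (F y0) 0).
    destruct (HFinv t ltac:(lra)) as [P E].
    destruct (Rlt_or_le (Finv t) y0) as [|[Hn|Hn]]; auto.
    - specialize (Hdec y0 (Finv t) Hy0 Hn). lra.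
    - rewrite <- Hn in E. lra. }
  pose proof (QMf f phi delta Hfp Hdelta Hphi Hfphi) as HQf.
  pose proof (QMh f phi F Finv delta Hfp Hdelta Hphi Hfphi HFinv Hdec) as HQh.
  assert (Hxpos : forall t, 0 <= t -> 0 < x t).
  { intros t Ht. destruct (Hxc0 (xi / 2) ltac:(lra)) as [d [Hd Hdd]].
    destruct (Rlt_or_le t d) as [Htd|Htd].
    - specialize (Hdd t ltac:(lra)). apply Rabs_def2 in Hdd. lra.
    - apply (no_down x (fun s => - f (x s) + g s) (d / 2) t); [lra| | |].
      + intros c Hc. apply Hxd. lra.
      + specialize (Hdd (d / 2) ltac:(lra)). apply Rabs_def2 in Hdd. lra.
      + intros c Hc Hx. rewrite Hx, Hf0. assert (0 < g c) by (apply Hgpos; lra). lra. }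
  set (u := fun t => F (x t)).
  set (u' := fun t => - / f (x t) * (- f (x t) + g t)).
  assert (Hud : forall t, 0 < t -> derivable_pt_lim u t (u' t)).
  { intros t Ht. unfold u, u'. apply (derivable_pt_lim_comp x F t). apply Hxd; auto. apply HFd, Hxpos; lra. }
  assert (Hupinf : lim_infty_pinf u).
  { intros M. destruct (Hinf0 M) as [d [Hd Hdd]]. destruct (Hxlim d Hd) as [T HT].
    exists (Rmax T 0). intros t Ht. pose proof (Rmax_l T 0). pose proof (Rmax_r T 0).
    specialize (HT t ltac:(lra)). rewrite Rminus_0_r in HT. apply Rabs_def2 in HT.
    apply Hdd. split; [apply Hxpos; lra|lra]. }
  destruct (Hupinf 0) as [T T_]. set (T0 := Rmax T 0).
  assert (HT0 : forall t, T0 < t -> 0 < t /\ 0 < u t).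
  { intros t Ht. pose proof (Rmax_l T 0). pose proof (Rmax_r T 0). unfold T0 in *. split; [lra|apply T_; lra]. }
  set (h := fun s => f (Finv s)).
  assert (Hhpos : forall s, 0 < s -> 0 < h s) by (intros s Hs; apply Hfp, HFinv; lra).
  assert (Hu' : forall t, T0 < t -> u' t = 1 - ratio t * h t / h (u t)).
  { intros t Ht. destruct (HT0 t Ht) as [Ht0 Hu0].
    destruct (HFinv (u t) ltac:(lra)) as [P E].
    assert (Hx := Hxpos t ltac:(lra)).
    assert (Hinv : Finv (u t) = x t).
    { unfold u in E. destruct (Rtotal_order (Finv (u t)) (x t)) as [Hl|[Hl|Hl]]; auto.
      - specialize (Hdec _ _ P Hl). unfold u in *; lra.
      - specialize (Hdec _ _ Hx Hl). unfold u in *; lra. }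
    unfold h, ratio, u'. rewrite Hinv.
    assert (0 < f (x t)) by (apply Hfp; auto). assert (0 < f (Finv t)) by (apply Hfp, HFinv; lra).
    field. split; lra. }
  assert (Hr0 : forall t, T0 < t -> 0 <= ratio t).
  { intros t Ht. destruct (HT0 t Ht) as [Ht0 _]. unfold ratio. left. apply Rdiv_lt_0_compat; [apply Hgpos; auto|apply Hfp, HFinv; lra]. }
  assert (HudT : forall t, T0 < t -> derivable_pt_lim u t (u' t)) by (intros t Ht; apply Hud, HT0; auto).
  assert (HcaseI : forall beta, 1 < beta -> RV0 beta f -> forall lam, 0 < lam ->
            lim_infty (fun t => h (lam * t) / h t) (Rpower lam (- (beta / (beta - 1))))).
  { intros beta Hb Hrv. apply (caseI_RV f F Finv beta); auto. }
  assert (HcaseII : RVinf (-1) h -> forall lam, 0 < lam ->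
            lim_infty (fun t => h (lam * t) / h t) (Rpower lam (- 1))).
  { intros [_ H] lam Hl. replace (- 1) with (-1) by ring. apply H; auto. }
  assert (Hp : exists p, 0 < p /\ forall lam, 0 < lam -> lim_infty (fun t => h (lam * t) / h t) (Rpower lam (- p))).
  { destruct HRV as [[beta [Hb Hrv]]|Hrv].
    - exists (beta / (beta - 1)). split; [apply Rdiv_lt_0_compat; lra|]. apply HcaseI; auto.
    - exists 1. split; [lra|]. apply HcaseII; auto. }
  destruct Hp as [p [Hp HRVh]].
  split; [|split].
  -
    intros Hr. apply (lim_finite u u' ratio h p T0 0 1); auto; try lra.
  -
    intros L HL Hr.
    destruct HRV as [[beta [Hb Hrv]]|Hrv].
    + set (q := beta / (beta - 1)).
      assert (Hq : 1 < q) by (unfold q; apply lt_div_iff; lra).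
      destruct (root_exists L q HL Hq) as [Lam [HLam HLq]].
      exists Lam. split; auto. split.
      { apply (lim_finite u u' ratio h q T0 L Lam); auto; try lra. apply HcaseI; auto. }
      split.
      * intros beta' Hb' Hrv'.
        assert (Hbb : beta' = beta).
        { destruct Hrv as [_ H1]. destruct Hrv' as [_ H2].
          apply Rpower_inj2. apply (lim_right0_unique (fun y => f (2 * y) / f y)); [apply H2|apply H1]; lra. }
        rewrite Hbb. fold q. split.
        -- rewrite Rpower_Ropp. assert (0 < Rpower Lam q) by apply Rpower_pos.
           replace (1 - Lam) with (L * Rpower Lam q) by lra. field. lra.
        -- intros mu Hmu Hmu'. rewrite Rpower_Ropp in Hmu'. assert (0 < Rpower mu q) by apply Rpower_pos.
           assert (Hmq : mu + L * Rpower mu q = 1).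
           { apply (Rmult_eq_compat_r (Rpower mu q)) in Hmu'.
             replace ((1 - mu) * / Rpower mu q * Rpower mu q) with (1 - mu) in Hmu' by (field; lra). lra. }
           destruct (Rtotal_order mu Lam) as [Hl|[Hl|Hl]]; auto.
           ++ pose proof (root_mono L q mu Lam ltac:(lra) ltac:(lra) ltac:(lra)). lra.
           ++ pose proof (root_mono L q Lam mu ltac:(lra) ltac:(lra) ltac:(lra)). lra.
      * intros HII. exfalso.
        assert (E : Rpower 2 (- q) = Rpower 2 (- 1)).
        { apply (lim_infty_unique (fun t => h (2 * t) / h t)). apply HcaseI; auto; lra. apply HcaseII; auto; lra. }
        apply Rpower_inj2 in E. lra.
    + exists (1 / (1 + L)). split; [split|split].
      * apply Rdiv_lt_0_compat; lra.
      * apply div_lt_iff; lra.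
      * apply (lim_finite u u' ratio h 1 T0 L (1 / (1 + L))); auto; try lra.
        -- split; [apply Rdiv_lt_0_compat; lra|]. left; apply div_lt_iff; lra.
        -- rewrite Rpower_1 by (apply Rdiv_lt_0_compat; lra). field. lra.
      * split; auto. intros beta Hb Hrv'. exfalso.
        assert (E : Rpower 2 (- (beta / (beta - 1))) = Rpower 2 (- 1)).
        { apply (lim_infty_unique (fun t => h (2 * t) / h t)). apply HcaseI; auto; lra. apply HcaseII; auto; lra. }
        apply Rpower_inj2 in E.
        assert (Hb1 : beta / (beta - 1) = 1) by lra.
        apply (Rmult_eq_compat_r (beta - 1)) in Hb1. unfold Rdiv in Hb1.
        rewrite Rmult_assoc, Rinv_l, Rmult_1_r in Hb1 by lra. lra.
  -
    intros Hr. apply (lim_infinite u u' ratio h p T0); auto.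
Qed.
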